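(* Let $p$ be an odd prime with $p\equiv2\pmod3$, let $\theta\in\mathrm{Aut}(\mathbb{F}_{p^m})$ have order dividing $p^s$, and let $\mathcal C$ be a skew $\theta$-cyclic code of length $3p^s$ over $\mathbb{F}_{p^m}$. (a) If $m$ is odd, then $x^{3p^s}-1=(x^{p^s}-1)(x^{2p^s}+x^{p^s}+1)$ with central coprime factors and $\mathcal C=\mathcal C_1\oplus\mathcal C_2$, where $\mathcal C_1,\mathcal C_2$ are left ideals of $\mathbb{F}_{p^m}[x;\theta]/\langle x^{p^s}-1\rangle$ and $\mathbb{F}_{p^m}[x;\theta]/\langle x^{2p^s}+x^{p^s}+1\rangle$ respectively. Moreover $|\mathcal C|=|\mathcal C_1||\mathcal C_2|$, $\mathcal C^\perp=\mathcal C_1^\perp\oplus\mathcal C_2^\perp$ where $\mathcal C_1^\perp,\mathcal C_2^\perp$ are left ideals of the same two rings respectively, and $\mathcal C$ is self-dual iff $\mathcal C_1=\mathcal C_1^\perp$ and $\mathcal C_2=\mathcal C_2^\perp$. (b) If $m$ is even, then with $\omega\in\mathbb{F}_{p^m}^*$ a primitive cube root of unity, $\mathcal C=\mathcal C_1\oplus\mathcal C_2\oplus\mathcal C_3$, where $\mathcal C_i$ is a left ideal of $\mathbb{F}_{p^m}[x;\theta]/\langle x^{p^s}-\omega^{i-1}\rangle$ ($i=1,2,3$); moreover $|\mathcal C|=|\mathcal C_1||\mathcal C_2||\mathcal C_3|$, $\mathcal C^\perp=\mathcal C_1^\perp\oplus\mathcal C_2^\perp\oplus\mathcal C_3^\perp$,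 and $\mathcal C$ is self-dual iff $\mathcal C_1=\mathcal C_1^\perp$, $\mathcal C_2=\mathcal C_3^\perp$, $\mathcal C_3=\mathcal C_2^\perp$.
   Context: $\mathbb{F}_{p^m}[x;\theta]$ is the skew polynomial ring with $xa=\theta(a)x$. A skew $\theta$-cyclic code of length $N$ over $\mathbb{F}_{p^m}$ is a left ideal of $\mathbb{F}_{p^m}[x;\theta]/\langle x^N-1\rangle$. The decompositions are via the Chinese Remainder isomorphism for the stated factorization. $\mathcal C^\perp$ is the Euclidean dual (again skew $\theta$-cyclic); $\mathcal C_i^\perp$ denotes its component in the corresponding factor ring (in (b), the factor $x^{p^s}-\omega^{1-i}$). Self-dual means $\mathcal C=\mathcal C^\perp$. *)

(* Defs.v *)
From HB Require Import structures.
From mathcomp Require Import all_boot all_order all_algebra.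
Set Implicit Arguments. Unset Strict Implicit. Unset Printing Implicit Defensive.
Import GRing.Theory.
Local Open Scope ring_scope.

(* Skew polynomials F[x; theta] are represented by their coefficient lists,
   i.e. by {poly F}, with the skew product  (a x^i)(b x^j) = a theta^i(b) x^(i+j). *)
Definition smul (F : fieldType) (theta : F -> F) (a b : {poly F}) : {poly F} :=
  \sum_(i < size a) \sum_(j < size b) (a`_i * iter i theta b`_j) *: 'X^(i + j).

Fixpoint srem_rec (F : fieldType) (theta : F -> F) (f : {poly F}) (k : nat)
    (a : {poly F}) : {poly F} :=
  match k with
  | 0 => a
  | k'.+1 => if (size a < size f)%N then a
             else srem_rec theta f k'
                    (a - smul theta (lead_coef a *: 'X^(size a - size f)) f)
  end.

Definition srem (F : fieldType) (theta : F -> F) (f a : {poly F}) : {poly F} :=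
  srem_rec theta f (size a) a.

(* Elements of F[x;theta]/<f>, deg f = n, are represented by their coefficient
   row vectors of length n (canonical representatives of degree < n). *)
Definition qmul (F : fieldType) (theta : F -> F) (n : nat) (f : {poly F})
    (a b : 'rV[F]_n) : 'rV[F]_n :=
  poly_rV (srem theta f (smul theta (rVpoly a) (rVpoly b))).

Definition skew_left_ideal (F : finFieldType) (theta : F -> F) (n : nat) (f : {poly F})
    (C : {set 'rV[F]_n}) : Prop :=
  [/\ 0 \in C,
      (forall u v, u \in C -> v \in C -> u - v \in C) &
      (forall a u, u \in C -> qmul theta f a u \in C)].

Definition skew_cyclic (F : finFieldType) (theta : F -> F) (N : nat)
    (C : {set 'rV[F]_N}) : Prop :=
  skew_left_ideal theta ('X^N - 1) C.

(* Component in the factor ring F[x;theta]/<f> (deg f = n) of an element of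
   F[x;theta]/<x^N - 1>: the Chinese-remainder projection a |-> a mod f. *)
Definition crt_comp (F : fieldType) (theta : F -> F) (N n : nat) (f : {poly F})
    (a : 'rV[F]_N) : 'rV[F]_n :=
  poly_rV (srem theta f (rVpoly a)).

Definition euclid_dual (F : finFieldType) (N : nat) (C : {set 'rV[F]_N}) : {set 'rV[F]_N} :=
  [set v : 'rV[F]_N | [forall c in C, \sum_(i < N) c 0 i * v 0 i == 0]].
Arguments crt_comp [F] theta [N n] f a.

(* Main.v *)
Require Import Defs.
From HB Require Import structures.
From mathcomp Require Import all_boot all_order all_algebra.
From mathcomp Require Import finfield zify ring.
From Stdlib Require Import Lia.
Set Implicit Arguments. Unset Strict Implicit. Unset Printing Implicit Defensive.
Import GRing.Theory.
Local Open Scope ring_scope.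

Section Skew.
Variable F : finFieldType.
Variable theta : {rmorphism F -> F}.
Local Notation Th := (map_poly theta).

Lemma coef_iterTh i (b : {poly F}) j : (iter i Th b)`_j = iter i theta b`_j.
Proof. by elim: i => [|i IH] //=; rewrite coef_map IH. Qed.

Lemma size_iterTh i (b : {poly F}) : size (iter i Th b) = size b.
Proof. by elim: i => [|i IH] //=; rewrite size_map_poly IH. Qed.

Lemma smulE a b : smul theta a b = \sum_(i < size a) (a`_i *: 'X^i) * iter i Th b.
Proof.
rewrite /smul; apply: eq_bigr => i _.
rewrite -[iter i Th b]coefK size_iterTh poly_def mulr_sumr.
apply: eq_bigr => j _; rewrite coef_iterTh.
by rewrite -scalerAl -scalerAr scalerA exprD.
Qed.
Definition fixp (f : {poly F}) := forall j, theta f`_j = f`_j.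

Lemma Th_fix f : fixp f -> Th f = f.
Proof. by move=> Hf; apply/polyP => j; rewrite coef_map; exact: Hf. Qed.

Lemma iterTh_fix i f : fixp f -> iter i Th f = f.
Proof. by move=> Hf; elim: i => //= i ->; rewrite Th_fix. Qed.

Lemma iterThM i (p q : {poly F}) : iter i Th (p * q) = iter i Th p * iter i Th q.
Proof. by elim: i => //= i ->; rewrite rmorphM. Qed.

Lemma iterThB i (p q : {poly F}) : iter i Th (p - q) = iter i Th p - iter i Th q.
Proof. by elim: i => //= i ->; rewrite rmorphB. Qed.

Lemma polyE (a : {poly F}) : a = \sum_(i < size a) a`_i *: 'X^i.
Proof. by rewrite -{1}[a]coefK poly_def. Qed.

Lemma smul_fixr a f : fixp f -> smul theta a f = a * f.
Proof.
move=> Hf; rewrite smulE.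
have -> : a * f = (\sum_(i < size a) a`_i *: 'X^i) * f by rewrite -polyE.
rewrite mulr_suml; apply: eq_bigr => i _.
by rewrite iterTh_fix.
Qed.

Lemma smulBr a b c : smul theta a (b - c) = smul theta a b - smul theta a c.
Proof.
rewrite !smulE -sumrB; apply: eq_bigr => i _; by rewrite iterThB mulrBr.
Qed.

Lemma smul_mulr a q f : fixp f -> smul theta a (q * f) = smul theta a q * f.
Proof.
move=> Hf; rewrite !smulE mulr_suml; apply: eq_bigr => i _.
by rewrite iterThM (iterTh_fix _ Hf) mulrA.
Qed.

Lemma smul_central (e y : {poly F}) : (forall i, e`_i != 0 -> forall x, iter i theta x = x) ->
  smul theta e y = e * y.
Proof.
move=> He; rewrite smulE.
have -> : e * y = (\sum_(i < size e) e`_i *: 'X^i) * y by rewrite -polyE.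
rewrite mulr_suml; apply: eq_bigr => i _.
have [->|nz] := eqVneq e`_i 0; first by rewrite !scale0r !mul0r.
congr (_ * _); apply/polyP => j; by rewrite coef_iterTh He.
Qed.

Lemma srem_recE f : f \is monic -> fixp f -> forall k (a : {poly F}),
  (size a < k + size f)%N -> srem_rec theta f k a = a %% f.
Proof.
move=> Hm Hf; elim=> [|k IH] a Ha /=; first by rewrite modp_small.
case: ifP => Hlt; first by rewrite modp_small.
have sf0 : (0 < size f)%N by rewrite size_poly_gt0 monic_neq0.
set d := (size a - size f)%N.
have Hsz : (size (a - smul theta (lead_coef a *: 'X^d) f)%R < size a)%N.
  have sa0 : (0 < size a)%N by move/negbT: Hlt; rewrite -leqNgt => /(leq_trans sf0).
  rewrite smul_fixr //; apply: (@leq_trans (size a).-1.+1); last by rewrite prednK.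
  rewrite ltnS; apply/leq_sizeP => j Hj; rewrite coefB -scalerAl coefZ coefXnM.
  have Hdj : (d <= j)%N by rewrite /d; move/negbT: Hlt; rewrite -leqNgt => H; lia.
  rewrite ltnNge Hdj /=.
  have [Hje|Hjn] := eqVneq j (size a).-1.
    have -> : (j - d = (size f).-1)%N by rewrite Hje /d; move/negbT: Hlt; rewrite -leqNgt; move: sf0 sa0; move: (size a) (size f) => x y; lia.
    by rewrite -lead_coefE (monicP Hm) mulr1 Hje -lead_coefE subrr.
  have Hj' : (size a <= j)%N by rewrite -(prednK sa0) ltn_neqAle eq_sym Hjn Hj.
  rewrite (leq_sizeP _ _ (leqnn _) j Hj') (leq_sizeP _ _ (leqnn _) (j - d)%N) ?mulr0 ?subr0 //.
  by rewrite /d; move/negbT: Hlt; rewrite -leqNgt; move: Hj'; move: (size a) (size f) => x y; lia.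
rewrite IH; last by apply: (leq_trans Hsz); rewrite -ltnS -addSn.
by rewrite smul_fixr // modpD modpN modp_mull oppr0 addr0.
Qed.

Lemma sremE f a : f \is monic -> fixp f -> srem theta f a = a %% f.
Proof.
move=> Hm Hf; apply: srem_recE => //.
by rewrite -addn1 leq_add2l size_poly_gt0 monic_neq0.
Qed.

Lemma size_rV d (v : 'rV[F]_d) : (size (rVpoly v) <= d)%N.
Proof. exact: size_poly. Qed.

Lemma modp_dvd (z g f : {poly F}) : f %| g -> (z %% g) %% f = z %% f.
Proof.
move=> Hfg; rewrite [in RHS](divp_eq z g) modpD.
by rewrite (modp_eq0 (dvdp_mull _ Hfg)) add0r.
Qed.

Lemma modpB (d p q : {poly F}) : (p - q) %% d = p %% d - q %% d.
Proof. by rewrite modpD modpN. Qed.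

Lemma crtE N n f (a : 'rV[F]_N) : f \is monic -> fixp f ->
  crt_comp theta (n:=n) f a = poly_rV (rVpoly a %% f).
Proof. by move=> Hm Hf; rewrite /crt_comp sremE. Qed.

Lemma qmulE n f (a u : 'rV[F]_n) : f \is monic -> fixp f ->
  qmul theta f a u = poly_rV (smul theta (rVpoly a) (rVpoly u) %% f).
Proof. by move=> Hm Hf; rewrite /qmul sremE. Qed.

Lemma smul_mod (b y f : {poly F}) : fixp f ->
  smul theta b (y %% f) %% f = smul theta b y %% f.
Proof.
move=> Hf.
have E : y %% f = y - y %/ f * f by rewrite {2}(divp_eq y f) addrAC subrr add0r.
by rewrite E smulBr smul_mulr // modpB modp_mull subr0.
Qed.

Lemma fixpD p q : fixp p -> fixp q -> fixp (p + q).
Proof. by move=> Hp Hq j; rewrite coefD rmorphD Hp Hq. Qed.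
Lemma fixpN p : fixp p -> fixp (- p).
Proof. by move=> Hp j; rewrite coefN rmorphN Hp. Qed.
Lemma fixpB p q : fixp p -> fixp q -> fixp (p - q).
Proof. by move=> Hp Hq; apply: fixpD => //; apply: fixpN. Qed.
Lemma fixpZ c p : theta c = c -> fixp p -> fixp (c *: p).
Proof. by move=> Hc Hp j; rewrite coefZ rmorphM Hc Hp. Qed.
Lemma fixpC c : theta c = c -> fixp c%:P.
Proof. by move=> Hc j; rewrite coefC; case: eqP => _; rewrite ?rmorph0. Qed.
Lemma fixpXn n : fixp 'X^n.
Proof. by move=> j; rewrite coefXn rmorph_nat. Qed.
Lemma fixp1 : fixp 1.
Proof. by rewrite -polyC1; apply: fixpC; rewrite rmorph1. Qed.

Definition MN N : {poly F} := 'X^N - 1.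
Lemma MN_monic N : (0 < N)%N -> MN N \is monic.
Proof. by move=> HN; rewrite /MN -polyC1 monicXnsubC. Qed.
Lemma MN_fix N : fixp (MN N).
Proof. by apply: fixpB; [apply: fixpXn | apply: fixp1]. Qed.
Lemma MN_size N : (0 < N)%N -> size (MN N) = N.+1.
Proof. by move=> HN; rewrite /MN -polyC1 size_XnsubC. Qed.

Lemma ideal_add n f (C : {set 'rV[F]_n}) u v : skew_left_ideal theta f C ->
  u \in C -> v \in C -> u + v \in C.
Proof.
case=> H0 HB _ Hu Hv; have := HB _ _ Hu (HB _ _ H0 Hv).
by rewrite sub0r opprK.
Qed.

Lemma ideal_sum n f (C : {set 'rV[F]_n}) I (r : seq I) (P : pred I) (G : I -> 'rV_n) :
  skew_left_ideal theta f C -> (forall i, P i -> G i \in C) -> \sum_(i <- r | P i) G i \in C.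
Proof.
move=> HC HG; apply: (big_ind (fun x => x \in C)) => //; first by case: HC.
move=> x y; exact: ideal_add HC.
Qed.

Lemma proj_ideal N n f (C : {set 'rV[F]_N}) : (0 < N)%N ->
  f \is monic -> fixp f -> size f = n.+1 -> f %| MN N ->
  skew_cyclic theta C ->
  skew_left_ideal theta f [set crt_comp theta (n:=n) f a | a in C].
Proof.
move=> HN Hm Hf Hs Hd HC.
have HMm := MN_monic HN; have HMf := MN_fix N.
have HnN : (n <= N)%N.
  have := dvdp_leq (monic_neq0 HMm) Hd; by rewrite Hs MN_size.
have Hsf (y : {poly F}) : (size (y %% f)%R <= n)%N.
  by rewrite -ltnS -Hs ltn_modp monic_neq0.
move: HC; rewrite /skew_cyclic /skew_left_ideal => -[H0 HB HQ]; split.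
- apply/imsetP; exists 0 => //; rewrite crtE // linear0 mod0p; by apply/rowP => i; rewrite !mxE coef0.
- move=> u v /imsetP [a Ha ->] /imsetP [b Hb ->]; apply/imsetP; exists (a - b); first exact: HB.
  by rewrite !crtE // !linearB /= modpB linearB.
- move=> b u /imsetP [c Hc ->]; apply/imsetP.
  exists (qmul theta (MN N) (poly_rV (rVpoly b) : 'rV_N) c); first exact: HQ.
  rewrite !crtE // !qmulE // !poly_rV_K ?(leq_trans (size_rV b) HnN) //.
  + by rewrite modp_dvd // smul_mod.
  + by rewrite -ltnS -(MN_size HN) ltn_modp monic_neq0.
Qed.

Lemma modp_sum (d : {poly F}) I (r : seq I) (P : pred I) (G : I -> {poly F}) :
  (\sum_(i <- r | P i) G i) %% d = \sum_(i <- r | P i) (G i %% d).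
Proof. by apply: (big_morph (fun p => p %% d)) => [x y|]; rewrite ?modpD ?mod0p. Qed.

Lemma crt_surj N k (f e : 'I_k -> {poly F}) (C : {set 'rV[F]_N}) (c : 'I_k -> 'rV[F]_N) :
  (0 < N)%N -> skew_cyclic theta C -> (forall i, c i \in C) ->
  (forall i y, smul theta (e i) y = e i * y) -> (forall i, size (e i) <= N)%N ->
  (forall i j, e i %% f j = (i == j)%:R) -> (forall j, f j %| MN N) ->
  exists2 a, a \in C & forall j, rVpoly a %% f j = rVpoly (c j) %% f j.
Proof.
move=> HN HC Hc He Hse Hef Hfd.
have HMm := MN_monic HN; have HMf := MN_fix N.
have HC' := HC; move: HC'; rewrite /skew_cyclic /skew_left_ideal => -[H0 HB HQ].
exists (\sum_i qmul theta (MN N) (poly_rV (e i)) (c i)).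
  by apply: (@ideal_sum N (MN N) C) => [|i _]; [exact: HC | exact: HQ].
move=> j; rewrite linear_sum modp_sum (bigD1 j) //= big1 ?addr0.
  rewrite qmulE // !poly_rV_K // ?He ?modp_dvd //.
    by rewrite mulrC -modp_mul Hef eqxx mulr1.
  by rewrite -ltnS -(MN_size HN) ltn_modp monic_neq0.
move=> i Hij; rewrite qmulE // !poly_rV_K // ?He ?modp_dvd //.
  by rewrite mulrC -modp_mul Hef (negbTE Hij) mulr0 mod0p.
by rewrite -ltnS -(MN_size HN) ltn_modp monic_neq0.
Qed.

Lemma crt_inj N k (f : 'I_k -> {poly F}) (a b : 'rV[F]_N) :
  (forall y : {poly F}, (size y <= N)%N -> (forall j, y %% f j = 0) -> y = 0) ->
  (forall j, rVpoly a %% f j = rVpoly b %% f j) -> a = b.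
Proof.
move=> Hcop Hab; apply: (can_inj rVpolyK); apply: subr0_eq; apply: Hcop.
  apply: (leq_trans (size_polyD _ _)); rewrite size_polyN geq_max !size_rV.
  done.
by move=> j; rewrite modpB Hab subrr.
Qed.

Lemma crt_in N k (f e : 'I_k -> {poly F}) (C : {set 'rV[F]_N}) (a : 'rV[F]_N) :
  (0 < N)%N -> skew_cyclic theta C ->
  (forall i y, smul theta (e i) y = e i * y) -> (forall i, size (e i) <= N)%N ->
  (forall i j, e i %% f j = (i == j)%:R) -> (forall j, f j %| MN N) ->
  (forall y : {poly F}, (size y <= N)%N -> (forall j, y %% f j = 0) -> y = 0) ->
  (forall j, exists2 x, x \in C & rVpoly a %% f j = rVpoly x %% f j) -> a \in C.
Proof.
move=> HN HC He Hse Hef Hfd Hcop Ha.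
have [c Hc] : exists c : 'I_k -> 'rV[F]_N, forall j, c j \in C /\ rVpoly a %% f j = rVpoly (c j) %% f j.
  by apply: (@fin_all_exists _ (fun _ => 'rV[F]_N) (fun j x => x \in C /\ rVpoly a %% f j = rVpoly x %% f j)) => j; have [x ? ?] := Ha j; exists x.
have [a' Ha' Heq] := crt_surj HN HC (fun i => proj1 (Hc i)) He Hse Hef Hfd.
have -> : a = a' by apply: (crt_inj Hcop) => j; rewrite Heq; exact: proj2 (Hc j).
done.
Qed.

Lemma crt_eq N n f (a b : 'rV[F]_N) : f \is monic -> fixp f -> size f = n.+1 ->
  (crt_comp theta (n:=n) f a = crt_comp theta (n:=n) f b) <-> (rVpoly a %% f = rVpoly b %% f).
Proof.
move=> Hm Hf Hs; rewrite !crtE //; split=> [|->] //.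
have Hsf (y : {poly F}) : (size (y %% f)%R <= n)%N by rewrite -ltnS -Hs ltn_modp monic_neq0.
by move/(congr1 rVpoly); rewrite !poly_rV_K.
Qed.

Lemma crt_mem N n f (C : {set 'rV[F]_N}) (a : 'rV[F]_N) : f \is monic -> fixp f -> size f = n.+1 ->
  (crt_comp theta (n:=n) f a \in [set crt_comp theta (n:=n) f x | x in C]) <->
  (exists2 x, x \in C & rVpoly a %% f = rVpoly x %% f).
Proof.
move=> Hm Hf Hs; split.
  by move/imsetP=> [x Hx /(proj1 (crt_eq _ _ Hm Hf Hs))]; exists x.
by move=> [x Hx /(proj2 (crt_eq _ _ Hm Hf Hs)) E]; apply/imsetP; exists x.
Qed.

Definition Sh N (v : 'rV[F]_N) : 'rV[F]_N := poly_rV (('X * Th (rVpoly v)) %% MN N).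

Lemma modM_small N (y : {poly F}) : (0 < N)%N -> (size y <= N)%N -> y %% MN N = y.
Proof. by move=> HN Hy; rewrite modp_small // MN_size. Qed.

Lemma size_modM N (y : {poly F}) : (0 < N)%N -> (size (y %% MN N)%R <= N)%N.
Proof. by move=> HN; rewrite -ltnS -(MN_size HN) ltn_modp monic_neq0 // MN_monic. Qed.

Lemma iterSh N k (v : 'rV[F]_N) : (0 < N)%N ->
  iter k (@Sh N) v = poly_rV (('X^k * iter k Th (rVpoly v)) %% MN N).
Proof.
move=> HN; elim: k => [|k IH] /=; first by rewrite mul1r modM_small ?size_rV // rVpolyK.
rewrite IH /Sh poly_rV_K ?size_modM // map_modp (Th_fix (MN_fix N)) modp_mul.
rewrite (rmorphM (map_poly theta)) mulrA exprS; congr (poly_rV ((_ * _) %% _)); congr (_ * _).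
exact: Th_fix (fixpXn k).
Qed.

Lemma qmul_Sh N (a v : 'rV[F]_N) : (0 < N)%N ->
  qmul theta (MN N) a v = \sum_(i < size (rVpoly a)) (rVpoly a)`_i *: iter i (@Sh N) v.
Proof.
move=> HN; rewrite qmulE ?MN_monic //; last exact: MN_fix.
rewrite smulE modp_sum linear_sum.
apply: eq_bigr => i _; rewrite iterSh // -scalerAl modpZl.
by rewrite linearZ.
Qed.

Lemma Sh_coef N (v : 'rV[F]_N) (j : 'I_N) : (0 < N)%N ->
  Sh v 0 j = if val j == 0%N then theta (rVpoly v)`_N.-1 else theta (rVpoly v)`_(val j).-1.
Proof.
move=> HN; set y := rVpoly v; set c := theta y`_N.-1.
set r := 'X * Th y - c *: MN N.
have Hr : (size r <= N)%N.
  apply/leq_sizeP => i Hi; rewrite /r coefB coefXM coefZ /MN coefB coefXn coef1 coef_map.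
  have -> : (i == 0%N) = false by apply/eqP; lia.
  have [->|HiN] := eqVneq i N.
    by rewrite subr0 mulr1 /c subrr.
  have Hlt : (N < i)%N by rewrite ltn_neqAle eq_sym HiN.
  rewrite (leq_sizeP _ _ (size_rV v) i.-1); last by rewrite -ltnS (ltn_predK Hlt).
  by rewrite subrr mulr0 subr0; exact: rmorph0.
have Er : ('X * Th y) %% MN N = r.
  have -> : 'X * Th y = r + c *: MN N by rewrite /r subrK.
  by rewrite modpD modpZl modpp scaler0 addr0 modM_small.
rewrite /Sh -/y Er mxE /r coefB coefXM coefZ /MN coefB coefXn coef1 coef_map.
have -> : (val j == N) = false by apply/eqP => E; have := ltn_ord j; rewrite E ltnn.
case: eqP => _; first by rewrite sub0r sub0r mulrN mulr1 opprK.
by rewrite subrr mulr0 subr0.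
Qed.

Lemma Sh_ip N (d v : 'rV[F]_N) : (0 < N)%N ->
  \sum_(i < N) Sh d 0 i * Sh v 0 i = theta (\sum_(i < N) d 0 i * v 0 i).
Proof.
case: N d v => [//|N] d v _.
rewrite rmorph_sum big_ord_recl big_ord_recr /= addrC; congr (_ + _).
  rewrite !Sh_coef //= -rmorphM; congr (theta _).
  by rewrite -!(coef_rVpoly_ord _ ord_max).
apply: eq_bigr => i _; rewrite !Sh_coef //= -rmorphM; congr (theta _).
by rewrite -!coef_rVpoly_ord.
Qed.

Lemma cyclic_Sh N (C : {set 'rV[F]_N}) c : (1 < N)%N -> skew_cyclic theta C ->
  c \in C -> Sh c \in C.
Proof.
move=> HN HC Hc; have HN0 : (0 < N)%N by apply: ltnW.
move: HC; rewrite /skew_cyclic /skew_left_ideal => -[H0 HB HQ].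
have := HQ (poly_rV 'X) c Hc; rewrite -[qmul _ _ _ _]/(qmul theta (MN N) _ _) qmul_Sh //.
rewrite poly_rV_K ?size_polyX // !big_ord_recl big_ord0 /= !coefX /=.
by rewrite scale0r add0r scale1r addr0.
Qed.

Lemma iterSh_N N (c : 'rV[F]_N) : (0 < N)%N -> (forall x, iter N theta x = x) ->
  iter N (@Sh N) c = c.
Proof.
move=> HN Hth; rewrite iterSh //.
have -> : iter N Th (rVpoly c) = rVpoly c by apply/polyP => j; rewrite coef_iterTh Hth.
have -> : 'X^N = MN N + 1 by rewrite /MN subrK.
by rewrite mulrDl mul1r modpD modp_mulr add0r modM_small ?size_rV // rVpolyK.
Qed.

Lemma dual_mem N (C : {set 'rV[F]_N}) v :
  v \in euclid_dual C <-> forall c, c \in C -> \sum_(i < N) c 0 i * v 0 i = 0.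
Proof.
rewrite inE; split=> [/forall_inP H c Hc | H]; first by apply/eqP; exact: H.
by apply/forall_inP => c Hc; apply/eqP; exact: H.
Qed.

Lemma dual_cyclic N (C : {set 'rV[F]_N}) : (1 < N)%N -> (forall x, iter N theta x = x) ->
  skew_cyclic theta C -> skew_cyclic theta (euclid_dual C).
Proof.
move=> HN Hth HC; have HN0 : (0 < N)%N by apply: ltnW.
have Hadd u v : u \in euclid_dual C -> v \in euclid_dual C -> u + v \in euclid_dual C.
  move=> /dual_mem Hu /dual_mem Hv; apply/dual_mem => c Hc.
  under eq_bigr do rewrite mxE mulrDr.
  by rewrite big_split /= Hu // Hv // addr0.
have Hopp u : u \in euclid_dual C -> - u \in euclid_dual C.
  move=> /dual_mem Hu; apply/dual_mem => c Hc.
  under eq_bigr do rewrite mxE mulrN.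
  by rewrite sumrN Hu // oppr0.
have Hsc k u : u \in euclid_dual C -> k *: u \in euclid_dual C.
  move=> /dual_mem Hu; apply/dual_mem => c Hc.
  under eq_bigr do rewrite mxE mulrCA.
  by rewrite -mulr_sumr Hu // mulr0.
have H0 : 0 \in euclid_dual C.
  by apply/dual_mem => c Hc; apply: big1 => i _; rewrite mxE mulr0.
have HSh u : u \in euclid_dual C -> Sh u \in euclid_dual C.
  move=> /dual_mem Hu; apply/dual_mem => c Hc.
  have Hd : iter N.-1 (@Sh N) c \in C.
    by elim: N.-1 => [|k IH] //=; apply: cyclic_Sh.
  have -> : c = Sh (iter N.-1 (@Sh N) c).
    by rewrite -iterS prednK // iterSh_N.
  by rewrite Sh_ip // Hu // rmorph0.
rewrite /skew_cyclic /skew_left_ideal; split => //.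
  by move=> u v Hu Hv; apply: Hadd => //; apply: Hopp.
move=> a u Hu; rewrite -[qmul _ _ _ _]/(qmul theta (MN N) _ _) qmul_Sh //.
apply: (big_ind (fun x => x \in euclid_dual C)) => // i _; apply: Hsc.
by elim: (nat_of_ord i) => [|k IH] //=; apply: HSh.
Qed.
End Skew.

Section Parts.
Variable F : finFieldType.
Variable theta : {rmorphism F -> F}.
Variable n : nat.
Hypothesis Hn : (0 < n)%N.
Hypothesis Hth : forall x, iter n theta x = x.

Lemma iter_mul k x : iter (k * n) theta x = x.
Proof. by elim: k => [|k IH] //=; rewrite mulSn iterD IH Hth. Qed.

Definition Pf (a b c : F) : {poly F} := a%:P + b *: 'X^n + c *: 'X^(2 * n).

Lemma Pf_central a b c y : smul theta (Pf a b c) y = Pf a b c * y.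
Proof.
apply: smul_central => i; rewrite /Pf !coefD coefC !coefZ !coefXn => Hnz x.
have [->|H0] := eqVneq i 0%N; first by [].
have [->|H1] := eqVneq i n; first exact: Hth.
have [->|H2] := eqVneq i (2 * n)%N; first exact: (iter_mul 2).
by move: Hnz; rewrite (negbTE H0) (negbTE H1) (negbTE H2) !mulr0 !addr0 eqxx.
Qed.

Lemma Pf_fix a b c : theta a = a -> theta b = b -> theta c = c -> fixp theta (Pf a b c).
Proof.
move=> Ha Hb Hc; apply: fixpD; first apply: fixpD.
- exact: fixpC.
- by apply: fixpZ => //; apply: fixpXn.
- by apply: fixpZ => //; apply: fixpXn.
Qed.

Lemma X2n : 'X^(2 * n) = 'X^n * 'X^n :> {poly F}.
Proof. by rewrite mul2n -addnn exprD. Qed.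

Lemma X3n : 'X^(3 * n) = 'X^n * 'X^n * 'X^n :> {poly F}.
Proof. by rewrite mulSn exprD X2n mulrA. Qed.

Lemma Pf_mod a b c d : Pf a b c %% ('X^n - d%:P) = (a + b * d + c * d ^+ 2)%:P.
Proof.
have -> : Pf a b c = (b%:P + c%:P * ('X^n + d%:P)) * ('X^n - d%:P) + (a + b * d + c * d ^+ 2)%:P.
  rewrite /Pf X2n -!mul_polyC !polyCD !polyCM; ring.
rewrite modpD modp_mull add0r modp_small // size_polyC size_XnsubC //.
by case: (_ != 0).
Qed.

Lemma Pf_size a b c : (size (Pf a b c) <= (2 * n).+1)%N.
Proof.
rewrite /Pf; apply: (leq_trans (size_polyD _ _)); rewrite geq_max; apply/andP; split.
  apply: (leq_trans (size_polyD _ _)); rewrite geq_max; apply/andP; split.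
    by rewrite size_polyC; case: (_ != 0) => //; lia.
  apply: (leq_trans (size_scale_leq _ _)); rewrite size_polyXn; lia.
by apply: (leq_trans (size_scale_leq _ _)); rewrite size_polyXn.
Qed.

Lemma fX_monic (d : F) : 'X^n - d%:P \is monic.
Proof. exact: monicXnsubC. Qed.
Lemma fX_size (d : F) : size ('X^n - d%:P) = n.+1.
Proof. exact: size_XnsubC. Qed.
Lemma fX_fix d : theta d = d -> fixp theta ('X^n - d%:P).
Proof. by move=> Hd; apply: fixpB; [apply: fixpXn | apply: fixpC]. Qed.

Lemma fX_dvd (d : F) : d ^+ 3 = 1 -> ('X^n - d%:P) %| MN F (3 * n).
Proof.
move=> Hd; apply/dvdpP; exists (Pf (d ^+ 2) d 1).
rewrite /MN /Pf X3n X2n scale1r -!mul_polyC -polyC1 -Hd.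
rewrite !exprS expr0 mulr1 !polyCM; ring.
Qed.

Lemma coprime_fX (d1 d2 : F) : d1 != d2 -> coprimep ('X^n - d1%:P) ('X^n - d2%:P).
Proof.
move=> Hd; apply/Bezout_eq1_coprimepP; exists ((d2 - d1)^-1%:P, - (d2 - d1)^-1%:P) => /=.
have Hne : d2 - d1 != 0 by rewrite subr_eq0 eq_sym.
rewrite mulNr -mulrBr.
have -> : 'X^n - d1%:P - ('X^n - d2%:P) = (d2 - d1)%:P by rewrite polyCB; ring.
by rewrite -polyCM mulVf.
Qed.
End Parts.

Section Glue.
Variable F : finFieldType.
Variable theta : {rmorphism F -> F}.

Definition crt_data N k (f e : 'I_k -> {poly F}) :=
  [/\ (forall i y, smul theta (e i) y = e i * y), (forall i, (size (e i) <= N)%N),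
      (forall i j, e i %% f j = (i == j)%:R), (forall j, f j %| MN F N) &
      (forall y : {poly F}, (size y <= N)%N -> (forall j, y %% f j = 0) -> y = 0)].

Definition two T (x y : T) : 'I_2 -> T := fun i => if val i == 0%N then x else y.

Lemma glue2 N n1 n2 (f1 f2 e1 e2 : {poly F}) (C : {set 'rV[F]_N}) :
  (0 < N)%N -> skew_cyclic theta C ->
  f1 \is monic -> fixp theta f1 -> size f1 = n1.+1 ->
  f2 \is monic -> fixp theta f2 -> size f2 = n2.+1 ->
  crt_data N (two f1 f2) (two e1 e2) ->
  [/\ skew_left_ideal theta f1 [set crt_comp theta (n:=n1) f1 a | a in C],
      skew_left_ideal theta f2 [set crt_comp theta (n:=n2) f2 a | a in C],
      (forall a, a \in C <-> (crt_comp theta (n:=n1) f1 a \in [set crt_comp theta (n:=n1) f1 a | a in C]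
                            /\ crt_comp theta (n:=n2) f2 a \in [set crt_comp theta (n:=n2) f2 a | a in C])) &
      #|C| = (#|[set crt_comp theta (n:=n1) f1 a | a in C]| * #|[set crt_comp theta (n:=n2) f2 a | a in C]|)%N].
Proof.
move=> HN HC Hm1 Hf1 Hs1 Hm2 Hf2 Hs2 [He Hse Hef Hfd Hcop].
have Hd1 : f1 %| MN F N by exact: (Hfd ord0).
have Hd2 : f2 %| MN F N by exact: (Hfd (lift ord0 ord0)).
split.
- exact: proj_ideal.
- exact: proj_ideal.
- move=> a; split=> [Ha|[/(crt_mem _ _ Hm1 Hf1 Hs1) [x1 Hx1 E1] /(crt_mem _ _ Hm2 Hf2 Hs2) [x2 Hx2 E2]]].
    by split; apply: imset_f.
  apply: (crt_in HN HC He Hse Hef Hfd Hcop) => -[[|[|//]] Hj] /=.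
    by exists x1.
  by exists x2.
- rewrite -(cardsX).
  have -> : setX [set crt_comp theta (n:=n1) f1 a | a in C] [set crt_comp theta (n:=n2) f2 a | a in C]
    = [set (crt_comp theta (n:=n1) f1 a, crt_comp theta (n:=n2) f2 a) | a in C].
    apply/setP => -[u v]; rewrite in_setX; apply/andP/imsetP.
      move=> [/imsetP [x1 Hx1 ->] /imsetP [x2 Hx2 ->]].
    have [a Ha Hres] := crt_surj (c := two x1 x2) HN HC (ltac:(by move=> -[[|[|//]] Hj])) He Hse Hef Hfd.
    exists a => //; congr (_, _); apply/esym.
      by apply/(crt_eq _ _ Hm1 Hf1 Hs1); exact: (Hres ord0).
    by apply/(crt_eq _ _ Hm2 Hf2 Hs2); exact: (Hres (lift ord0 ord0)).
    by move=> [a Ha [-> ->]]; split; apply: imset_f.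
  rewrite card_in_imset // => a b _ _ [/(crt_eq _ _ Hm1 Hf1 Hs1) E1 /(crt_eq _ _ Hm2 Hf2 Hs2) E2].
  by apply: (crt_inj Hcop) => -[[|[|//]] Hj].
Qed.

Definition three T (x y z : T) : 'I_3 -> T :=
  fun i => if val i == 0%N then x else if val i == 1%N then y else z.

Lemma glue3 N n1 n2 n3 (f1 f2 f3 e1 e2 e3 : {poly F}) (C : {set 'rV[F]_N}) :
  (0 < N)%N -> skew_cyclic theta C ->
  f1 \is monic -> fixp theta f1 -> size f1 = n1.+1 ->
  f2 \is monic -> fixp theta f2 -> size f2 = n2.+1 ->
  f3 \is monic -> fixp theta f3 -> size f3 = n3.+1 ->
  crt_data N (three f1 f2 f3) (three e1 e2 e3) ->
  [/\ [/\ skew_left_ideal theta f1 [set crt_comp theta (n:=n1) f1 a | a in C],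
      skew_left_ideal theta f2 [set crt_comp theta (n:=n2) f2 a | a in C] &
      skew_left_ideal theta f3 [set crt_comp theta (n:=n3) f3 a | a in C]],
      (forall a, a \in C <-> [/\ crt_comp theta (n:=n1) f1 a \in [set crt_comp theta (n:=n1) f1 a | a in C],
                               crt_comp theta (n:=n2) f2 a \in [set crt_comp theta (n:=n2) f2 a | a in C] &
                               crt_comp theta (n:=n3) f3 a \in [set crt_comp theta (n:=n3) f3 a | a in C]]) &
      #|C| = (#|[set crt_comp theta (n:=n1) f1 a | a in C]| * #|[set crt_comp theta (n:=n2) f2 a | a in C]|
              * #|[set crt_comp theta (n:=n3) f3 a | a in C]|)%N].
Proof.
move=> HN HC Hm1 Hf1 Hs1 Hm2 Hf2 Hs2 Hm3 Hf3 Hs3 [He Hse Hef Hfd Hcop].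
have Hd1 : f1 %| MN F N by exact: (Hfd ord0).
have Hd2 : f2 %| MN F N by exact: (Hfd (lift ord0 ord0)).
have Hd3 : f3 %| MN F N by exact: (Hfd (lift ord0 (lift ord0 ord0))).
split.
- by split; apply: proj_ideal.
- move=> a; split=> [Ha|[/(crt_mem _ _ Hm1 Hf1 Hs1) [x1 Hx1 E1] /(crt_mem _ _ Hm2 Hf2 Hs2) [x2 Hx2 E2]
                        /(crt_mem _ _ Hm3 Hf3 Hs3) [x3 Hx3 E3]]].
    by split; apply: imset_f.
  apply: (crt_in HN HC He Hse Hef Hfd Hcop) => -[[|[|[|//]]] Hj] /=.
  + by exists x1.
  + by exists x2.
  + by exists x3.
- rewrite -!(cardsX).
  have -> : setX (setX [set crt_comp theta (n:=n1) f1 a | a in C] [set crt_comp theta (n:=n2) f2 a | a in C])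
             [set crt_comp theta (n:=n3) f3 a | a in C]
    = [set ((crt_comp theta (n:=n1) f1 a, crt_comp theta (n:=n2) f2 a), crt_comp theta (n:=n3) f3 a) | a in C].
    apply/setP => -[[u v] w]; rewrite !in_setX; apply/andP/imsetP.
      move=> [/andP [/imsetP [x1 Hx1 ->] /imsetP [x2 Hx2 ->]] /imsetP [x3 Hx3 ->]].
      have [a Ha Hres] := crt_surj (c := three x1 x2 x3) HN HC (ltac:(by move=> -[[|[|[|//]]] Hj])) He Hse Hef Hfd.
      exists a => //; congr ((_, _), _); apply/esym.
      + by apply/(crt_eq _ _ Hm1 Hf1 Hs1); exact: (Hres ord0).
      + by apply/(crt_eq _ _ Hm2 Hf2 Hs2); exact: (Hres (lift ord0 ord0)).
      + by apply/(crt_eq _ _ Hm3 Hf3 Hs3); exact: (Hres (lift ord0 (lift ord0 ord0))).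
    by move=> [a Ha [-> -> ->]]; split; [apply/andP; split|]; apply: imset_f.
  rewrite card_in_imset // => a b _ _ [/(crt_eq _ _ Hm1 Hf1 Hs1) E1 /(crt_eq _ _ Hm2 Hf2 Hs2) E2
                                       /(crt_eq _ _ Hm3 Hf3 Hs3) E3].
  by apply: (crt_inj Hcop) => -[[|[|[|//]]] Hj].
Qed.
End Glue.

Section PartA.
Variable F : finFieldType.
Variable theta : {rmorphism F -> F}.
Variable n : nat.
Hypothesis Hn : (0 < n)%N.
Hypothesis Hth : forall x, iter n theta x = x.
Hypothesis H3 : (3%:R : F) != 0.

Let f1 : {poly F} := 'X^n - 1.
Let f2 : {poly F} := 'X^(2 * n) + 'X^n + 1.
Let t : F := (3%:R)^-1.

Lemma Ht : t + t + t = 1.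
Proof. by rewrite -[RHS](mulVf H3) /t; ring. Qed.

Lemma f1E : f1 = Pf n (-1) 1 0.
Proof. by rewrite /f1 /Pf scale1r scale0r addr0 polyCN polyC1 addrC. Qed.
Lemma f1E' : f1 = 'X^n - 1%:P.
Proof. by rewrite polyC1. Qed.
Lemma f2E : f2 = Pf n 1 1 1.
Proof. by rewrite /f2 /Pf !scale1r polyC1; ring. Qed.

Lemma f1_monic : f1 \is monic. Proof. by rewrite f1E' monicXnsubC. Qed.
Lemma f1_size : size f1 = n.+1. Proof. by rewrite f1E' size_XnsubC. Qed.
Lemma f1_fix : fixp theta f1. Proof. by apply: fixpB; [apply: fixpXn | apply: fixp1]. Qed.
Lemma f2_fix : fixp theta f2.
Proof. by apply: fixpD; [apply: fixpD; apply: fixpXn | apply: fixp1]. Qed.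
Lemma f2_size : size f2 = (2 * n).+1.
Proof.
have Hs : size ('X^(2 * n) : {poly F}) = (2 * n).+1 by exact: size_polyXn.
rewrite /f2 -addrA -polyC1 size_polyDl Hs // size_XnaddC //; lia.
Qed.
Lemma f2_monic : f2 \is monic.
Proof.
have Hs : size ('X^(2 * n) : {poly F}) = (2 * n).+1 by exact: size_polyXn.
apply/monicP; rewrite /f2 -addrA -polyC1 lead_coefDl; first exact: lead_coefXn.
by rewrite size_XnaddC // Hs; lia.
Qed.

Lemma f12 : f1 * f2 = MN F (3 * n).
Proof. by rewrite /f1 /f2 /MN X3n X2n; ring. Qed.

Lemma bez : (- (t%:P * ('X^n + 2))) * f1 + t%:P * f2 = 1.
Proof.
have -> : (- (t%:P * ('X^n + 2))) * f1 + t%:P * f2 = t%:P * 3%:R.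
  by rewrite /f1 /f2 X2n; ring.
by rewrite -polyC_natr -polyCM mulVf // polyC1.
Qed.

Definition e1 : {poly F} := Pf n t t t.
Definition e2 : {poly F} := Pf n (1 - t) (- t) (- t).

Lemma e1E : e1 = t *: f2.
Proof. by rewrite f2E /e1 /Pf !scalerDr scale_polyC !mulr1 !scalerA mulr1. Qed.
Lemma e2E : e2 = 1 - t *: f2.
Proof.
rewrite f2E /e2 /Pf !scalerDr scale_polyC !mulr1 !scalerA mulr1 polyCB polyC1 !scaleNr.
by rewrite !opprD !addrA.
Qed.

Lemma cdA : crt_data theta (3 * n) (two f1 f2) (two e1 e2).
Proof.
split.
- by move=> [[|[|//]] Hi] y; rewrite /two /= Pf_central.
- move=> [[|[|//]] Hi]; rewrite /two /=; apply: (leq_trans (Pf_size _ _ _ _)); lia.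
- move=> [[|[|//]] Hi] [[|[|//]] Hj]; rewrite /two /=.
  + by rewrite f1E' /e1 Pf_mod // mulr1 expr1n mulr1 Ht.
  + by rewrite e1E modpZl modpp scaler0.
  + rewrite f1E' /e2 Pf_mod // mulr1 expr1n mulr1.
    by have -> : 1 - t - t - t = 0 by rewrite -{1}Ht; ring.
  + rewrite e2E modpB modpZl modpp scaler0 subr0 modp_small //.
    rewrite size_poly1 f2_size; lia.
- move=> [[|[|//]] Hj]; rewrite /two /= -f12.
  + exact: dvdp_mulr.
  + exact: dvdp_mull.
- move=> y Hy Hres.
  have Hcop : coprimep f1 f2.
    by apply/Bezout_eq1_coprimepP; exists (- (t%:P * ('X^n + 2)), t%:P); exact: bez.
  have : f1 * f2 %| y.
    rewrite Gauss_dvdp //; apply/andP; split; apply/modp_eq0P.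
    + exact: (Hres ord0).
    + exact: (Hres (lift ord0 ord0)).
  apply: contraTeq => Hy0; apply/negP => /(dvdp_leq Hy0).
  rewrite f12 MN_size; last by lia.
  by rewrite ltnNge Hy.
Qed.


Lemma partA_main (C : {set 'rV[F]_(3 * n)}) : skew_cyclic theta C ->
  [/\ 'X^(3 * n) - 1 = smul theta f1 f2,
      (forall a, smul theta a f1 = smul theta f1 a),
      (forall a, smul theta a f2 = smul theta f2 a),
      (exists u v, smul theta u f1 + smul theta v f2 = 1) &
   exists (C1 : {set 'rV[F]_n}) (C2 : {set 'rV[F]_(2 * n)})
          (D1 : {set 'rV[F]_n}) (D2 : {set 'rV[F]_(2 * n)}),
     [/\ [/\ skew_left_ideal theta f1 C1, skew_left_ideal theta f2 C2,
             skew_left_ideal theta f1 D1 & skew_left_ideal theta f2 D2],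
         (forall a, a \in C <-> (crt_comp theta f1 a \in C1 /\ crt_comp theta f2 a \in C2)),
         #|C| = (#|C1| * #|C2|)%N,
         (forall a, a \in euclid_dual C <-> (crt_comp theta f1 a \in D1 /\ crt_comp theta f2 a \in D2)) &
         (C = euclid_dual C <-> (C1 = D1 /\ C2 = D2))]].
Proof.
move=> HC.
have HN : (0 < 3 * n)%N by lia.
have HN1 : (1 < 3 * n)%N by lia.
have HthN : forall x, iter (3 * n) theta x = x by move=> x; apply: (iter_mul Hth).
have HD := dual_cyclic HN1 HthN HC.
have [I1 I2 Hmem Hcard] := glue2 (n1 := n) (n2 := 2 * n) HN HC f1_monic f1_fix f1_size
                                f2_monic f2_fix f2_size cdA.
have [J1 J2 Dmem Dcard] := glue2 (n1 := n) (n2 := 2 * n) HN HD f1_monic f1_fix f1_size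
                                f2_monic f2_fix f2_size cdA.
split.
- rewrite smul_fixr; last exact: f2_fix.
  by apply: esym; exact: f12.
- move=> a; rewrite smul_fixr; last exact: f1_fix.
  rewrite f1E (Pf_central Hth) -f1E; exact: mulrC.
- move=> a; rewrite smul_fixr; last exact: f2_fix.
  rewrite f2E (Pf_central Hth) -f2E; exact: mulrC.
- exists (- (t%:P * ('X^n + 2))), t%:P.
  rewrite smul_fixr; last exact: f1_fix.
  rewrite smul_fixr; last exact: f2_fix.
  exact: bez.
exists [set crt_comp theta (n:=n) f1 a | a in C], [set crt_comp theta (n:=2 * n) f2 a | a in C].
exists [set crt_comp theta (n:=n) f1 a | a in euclid_dual C].
exists [set crt_comp theta (n:=2 * n) f2 a | a in euclid_dual C].
split => //.
split=> [E|[E1 E2]].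
  by rewrite -E.
apply/setP => a; apply/idP/idP => Ha.
  by apply/Dmem; rewrite -E1 -E2; apply/Hmem.
by apply/Hmem; rewrite E1 E2; apply/Dmem.
Qed.
End PartA.

Section PartB.
Variable F : finFieldType.
Variable theta : {rmorphism F -> F}.
Variable n : nat.
Hypothesis Hn : (0 < n)%N.
Hypothesis Hth : forall x, iter n theta x = x.
Hypothesis H3 : (3%:R : F) != 0.
Variable w : F.
Hypothesis Hw : 3.-primitive_root w.
Hypothesis Hthw : theta w = w.

Let t : F := (3%:R)^-1.
Lemma HtB : t + t + t = 1.
Proof. by rewrite -[RHS](mulVf H3) /t; ring. Qed.

Lemma Hw3 : w ^+ 3 = 1. Proof. exact: prim_expr_order. Qed.
Lemma Hw1 : w != 1.
Proof. by have := eq_prim_root_expr Hw 1 0; rewrite expr1 expr0 => ->. Qed.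
Lemma Hsum : 1 + w + w ^+ 2 = 0.
Proof.
have : (w - 1) * (1 + w + w ^+ 2) = 0.
  have -> : (w - 1) * (1 + w + w ^+ 2) = w ^+ 3 - 1 by ring.
  by rewrite Hw3 subrr.
by move/eqP; rewrite mulf_eq0 subr_eq0 (negbTE Hw1) /= => /eqP.
Qed.

Definition fX (k : nat) : {poly F} := 'X^n - (w ^+ k)%:P.
Definition eX (k : nat) : {poly F} := Pf n t (t * w ^+ (2 * k)) (t * w ^+ k).

Lemma eX_mod (a b : 'I_3) : eX a %% fX b = (a == b)%:R.
Proof.
rewrite /eX /fX Pf_mod //.
have -> : t + t * w ^+ (2 * a) * w ^+ b + t * w ^+ a * (w ^+ b) ^+ 2
        = t + t * w ^+ ((2 * a + b) %% 3) + t * w ^+ ((a + b * 2) %% 3).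
  rewrite !(expr_mod _ Hw3) exprD (exprD _ a) [w ^+ (b * 2)]exprM; ring.
have Hs : t + t * w + t * w ^+ 2 = 0.
  have -> : t + t * w + t * w ^+ 2 = t * (1 + w + w ^+ 2) by ring.
  by rewrite Hsum mulr0.
case: a => [[|[|[|//]]] Ha]; case: b => [[|[|[|//]]] Hb] /=;
  rewrite ?expr0 ?expr1 ?mulr1 ?HtB ?polyC1 ?polyC0 //; try (rewrite Hs polyC0 //); try (rewrite -addrA [t * _ + _]addrC addrA Hs polyC0 //).
Qed.

Lemma fX_fixp k : fixp theta (fX k).
Proof. by apply: fX_fix; rewrite rmorphXn Hthw. Qed.
Lemma fXmonic k : fX k \is monic. Proof. exact: fX_monic. Qed.
Lemma fXsize k : size (fX k) = n.+1. Proof. exact: fX_size. Qed.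
Lemma fXdvd k : fX k %| MN F (3 * n).
Proof. by apply: fX_dvd; rewrite -exprM mulnC exprM Hw3 expr1n. Qed.

Lemma fX_ne (a b : 'I_3) : a != b -> w ^+ a != w ^+ b.
Proof. by move=> Hab; rewrite (eq_prim_root_expr Hw) !modn_small. Qed.

Lemma cdB (i1 i2 i3 : 'I_3) : i1 != i2 -> i1 != i3 -> i2 != i3 ->
  crt_data theta (3 * n) (three (fX i1) (fX i2) (fX i3)) (three (eX i1) (eX i2) (eX i3)).
Proof.
move=> H12 H13 H23; split.
- by move=> [[|[|[|//]]] Hi] y; rewrite /three /= /eX (Pf_central Hth).
- move=> [[|[|[|//]]] Hi]; rewrite /three /=; apply: (leq_trans (Pf_size _ _ _ _)); lia.
- move=> [[|[|[|//]]] Hi] [[|[|[|//]]] Hj]; rewrite /three /= eX_mod //;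
    by rewrite ?eqxx ?(negbTE H12) ?(negbTE H13) ?(negbTE H23)
               ?(eq_sym i2 i1) ?(eq_sym i3 i1) ?(eq_sym i3 i2) ?(negbTE H12) ?(negbTE H13) ?(negbTE H23).
- by move=> [[|[|[|//]]] Hj]; rewrite /three /=; apply: fXdvd.
- move=> y Hy Hres.
  have R1 : fX i1 %| y by apply/modp_eq0P; exact: (Hres ord0).
  have R2 : fX i2 %| y by apply/modp_eq0P; exact: (Hres (lift ord0 ord0)).
  have R3 : fX i3 %| y by apply/modp_eq0P; exact: (Hres (lift ord0 (lift ord0 ord0))).
  have C12 : coprimep (fX i1) (fX i2) by apply: coprime_fX; apply: fX_ne.
  have C3 : coprimep (fX i1 * fX i2) (fX i3).
    by rewrite coprimepMl !coprime_fX // fX_ne.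
  have : fX i1 * fX i2 * fX i3 %| y by rewrite Gauss_dvdp // R3 Gauss_dvdp // R1 R2.
  apply: contraTeq => Hy0; apply/negP => /(dvdp_leq Hy0).
  have nz k : fX k != 0 by apply: monic_neq0; apply: fXmonic.
  rewrite size_mul ?mulf_neq0 // size_mul // !fXsize.
  move: Hy; rewrite -ltnS => Hy Hle; have := leq_trans Hle Hy; lia.
Qed.

Lemma partB_main (C : {set 'rV[F]_(3 * n)}) : skew_cyclic theta C ->
     let f (i : nat) : {poly F} := 'X^n - (w ^+ (i - 1))%:P in
     let g (i : nat) : {poly F} := 'X^n - (w ^- (i - 1))%:P in
     exists (C1 C2 C3 D1 D2 D3 : {set 'rV[F]_n}),
       [/\ [/\ skew_left_ideal theta (f 1%N) C1, skew_left_ideal theta (f 2%N) C2,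
               skew_left_ideal theta (f 3%N) C3 & [/\ skew_left_ideal theta (g 1%N) D1,
               skew_left_ideal theta (g 2%N) D2 & skew_left_ideal theta (g 3%N) D3]],
           (forall a, a \in C <->
              [/\ crt_comp theta (f 1%N) a \in C1, crt_comp theta (f 2%N) a \in C2
                & crt_comp theta (f 3%N) a \in C3]),
           #|C| = (#|C1| * #|C2| * #|C3|)%N,
           (forall a, a \in euclid_dual C <->
              [/\ crt_comp theta (g 1%N) a \in D1, crt_comp theta (g 2%N) a \in D2
                & crt_comp theta (g 3%N) a \in D3]) &
           (C = euclid_dual C <-> [/\ C1 = D1, C2 = D3 & C3 = D2])].
Proof.
move=> HC f g.
have HN : (0 < 3 * n)%N by lia.
have HN1 : (1 < 3 * n)%N by lia.
have HthN : forall x, iter (3 * n) theta x = x by move=> x; apply: (iter_mul Hth).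
have HD := dual_cyclic HN1 HthN HC.
have Hw0 : w != 0 by rewrite (prim_root_eq0 Hw).
have Ef1 : f 1%N = fX 0 by [].
have Ef2 : f 2%N = fX 1 by [].
have Ef3 : f 3%N = fX 2 by [].
have Eg1 : g 1%N = fX 0 by rewrite /g /fX /= expr0 invr1.
have Eg2 : g 2%N = fX 2.
  rewrite /g /fX /=; congr ('X^n - _%:P); apply: (mulfI Hw0).
  by rewrite expr1 mulfV // -exprS Hw3.
have Eg3 : g 3%N = fX 1.
  rewrite /g /fX /=; congr ('X^n - _%:P); apply: (mulfI (expf_neq0 2 Hw0)).
  by rewrite mulfV ?expf_neq0 // expr1 -exprSr Hw3.
rewrite Ef1 Ef2 Ef3 Eg1 Eg2 Eg3.
pose o0 : 'I_3 := ord0. pose o1 : 'I_3 := lift ord0 ord0. pose o2 : 'I_3 := lift ord0 (lift ord0 ord0).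
have [[I1 I2 I3] Hmem Hcard] := glue3 (n1 := n) (n2 := n) (n3 := n) HN HC
   (fXmonic 0) (fX_fixp 0) (fXsize 0) (fXmonic 1) (fX_fixp 1) (fXsize 1)
   (fXmonic 2) (fX_fixp 2) (fXsize 2) (cdB (i1 := o0) (i2 := o1) (i3 := o2) erefl erefl erefl).
have [[J1 J2 J3] Dmem Dcard] := glue3 (n1 := n) (n2 := n) (n3 := n) HN HD
   (fXmonic 0) (fX_fixp 0) (fXsize 0) (fXmonic 2) (fX_fixp 2) (fXsize 2)
   (fXmonic 1) (fX_fixp 1) (fXsize 1) (cdB (i1 := o0) (i2 := o2) (i3 := o1) erefl erefl erefl).
exists [set crt_comp theta (n:=n) (fX 0) a | a in C], [set crt_comp theta (n:=n) (fX 1) a | a in C].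
exists [set crt_comp theta (n:=n) (fX 2) a | a in C].
exists [set crt_comp theta (n:=n) (fX 0) a | a in euclid_dual C].
exists [set crt_comp theta (n:=n) (fX 2) a | a in euclid_dual C].
exists [set crt_comp theta (n:=n) (fX 1) a | a in euclid_dual C].
split => //.
split=> [E|[E1 E2 E3]].
  by rewrite -E.
apply/setP => a; apply/idP/idP => Ha.
  by apply/Dmem; have [? ? ?] := proj1 (Hmem a) Ha; rewrite -E1 -E2 -E3; split.
by apply/Hmem; have [? ? ?] := proj1 (Dmem a) Ha; rewrite E1 E2 E3; split.
Qed.
End PartB.

Lemma pow2mod k : (2 ^ k %% 3 = if odd k then 2 else 1)%N.
Proof.
elim: k => [//|k IH]; rewrite expnS -modnMmr IH /=.
by case: (odd k).
Qed.

Theorem theorem4p3 (F : finFieldType) (p m s : nat) (theta : {rmorphism F -> F}) :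
  prime p -> odd p -> (p %% 3 = 2)%N -> #|F| = (p ^ m)%N ->
  bijective theta ->
  (forall x : F, iter (p ^ s) theta x = x) ->
  forall C : {set 'rV[F]_(3 * p ^ s)},
  skew_cyclic theta C ->
  (odd m ->
     let f1 : {poly F} := 'X^(p ^ s) - 1 in
     let f2 : {poly F} := 'X^(2 * p ^ s) + 'X^(p ^ s) + 1 in
     [/\ 'X^(3 * p ^ s) - 1 = smul theta f1 f2,
         (forall a, smul theta a f1 = smul theta f1 a),
         (forall a, smul theta a f2 = smul theta f2 a),
         (exists u v, smul theta u f1 + smul theta v f2 = 1) &
     exists (C1 : {set 'rV[F]_(p ^ s)}) (C2 : {set 'rV[F]_(2 * p ^ s)})
            (D1 : {set 'rV[F]_(p ^ s)}) (D2 : {set 'rV[F]_(2 * p ^ s)}),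
       [/\ [/\ skew_left_ideal theta f1 C1, skew_left_ideal theta f2 C2,
               skew_left_ideal theta f1 D1 & skew_left_ideal theta f2 D2],
           (forall a, a \in C <-> (crt_comp theta f1 a \in C1 /\ crt_comp theta f2 a \in C2)),
           #|C| = (#|C1| * #|C2|)%N,
           (forall a, a \in euclid_dual C <-> (crt_comp theta f1 a \in D1 /\ crt_comp theta f2 a \in D2)) &
           (C = euclid_dual C <-> (C1 = D1 /\ C2 = D2))]]) /\
  (~~ odd m -> forall w : F, 3.-primitive_root w ->
     let f (i : nat) : {poly F} := 'X^(p ^ s) - (w ^+ (i - 1))%:P in
     let g (i : nat) : {poly F} := 'X^(p ^ s) - (w ^- (i - 1))%:P in
     exists (C1 C2 C3 D1 D2 D3 : {set 'rV[F]_(p ^ s)}),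
       [/\ [/\ skew_left_ideal theta (f 1%N) C1, skew_left_ideal theta (f 2%N) C2,
               skew_left_ideal theta (f 3%N) C3 & [/\ skew_left_ideal theta (g 1%N) D1,
               skew_left_ideal theta (g 2%N) D2 & skew_left_ideal theta (g 3%N) D3]],
           (forall a, a \in C <->
              [/\ crt_comp theta (f 1%N) a \in C1, crt_comp theta (f 2%N) a \in C2
                & crt_comp theta (f 3%N) a \in C3]),
           #|C| = (#|C1| * #|C2| * #|C3|)%N,
           (forall a, a \in euclid_dual C <->
              [/\ crt_comp theta (g 1%N) a \in D1, crt_comp theta (g 2%N) a \in D2
                & crt_comp theta (g 3%N) a \in D3]) &
           (C = euclid_dual C <-> [/\ C1 = D1, C2 = D3 & C3 = D2])]).
Proof.
move=> Hp Hodd Hp3 Hcard _ Hth C HC.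
have Hn : (0 < p ^ s)%N by rewrite expn_gt0 prime_gt0.
have H3 : (3%:R : F) != 0.
  have Hch := card_finPcharP Hcard Hp.
  rewrite -(dvdn_charf Hch); apply/negP => Hd.
  have := dvdn_leq (erefl true : (0 < 3)%N) Hd; move: Hd Hp3; clear.
  by case: p => [|[|[|[|p]]]].
split.
  by move=> _; exact: (partA_main Hn Hth H3 HC).
move=> _ w Hw.
have Hthw : theta w = w.
  have Ht3 : theta w ^+ 3 = 1 by rewrite -rmorphXn (prim_expr_order Hw) rmorph1.
  have [i Hi] := prim_rootP Hw Ht3.
  move: i Hi => [[|[|[|//]]] Hi] /= Htw.
  - exfalso; move: Htw; rewrite expr0 -(rmorph1 theta) => /fmorph_inj Hw1.
    by have := eq_prim_root_expr Hw 1 0; rewrite expr1 expr0 Hw1 eqxx.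
  - by rewrite Htw expr1.
  - exfalso.
    have Hit k : iter k theta w = w ^+ (2 ^ k).
      elim: k => [|k IH] /=; first by rewrite expr1.
      by rewrite IH rmorphXn Htw -exprM expnS mulnC.
    have := Hth w; rewrite Hit => /eqP; rewrite -{2}(expr1 w) (eq_prim_root_expr Hw).
    by rewrite pow2mod oddX Hodd orbT.
exact: (partB_main Hn Hth H3 Hw Hthw HC).
Qed.
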